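(* Let $(a,D)$ be a weak hyperoperator on $\mathbb{R}$ in the complex Banach space $X$, and assume that for each $z\in\mathbb{C}\setminus\mathbb{R}$ the closure of $r_z(a)$ is a bounded operator on $X$, where $r_z(\xi)=1/(z-\xi)$. Then the closure $\bar a$ of $a$ has real spectrum in the usual sense, i.e. every $z\in\mathbb{C}\setminus\mathbb{R}$ belongs to the resolvent set of $\bar a$.
   Context: $X$ is a complex Banach space. $\mathcal{E}(\mathbb{R})=C^\infty(\mathbb{R})$ (complex-valued) with the topology of uniform convergence of all derivatives on compacts; $r_z\in\mathcal{E}(\mathbb{R})$ for $z\notin\mathbb{R}$. For a dense subspace $D\subset X$, $\mathbf{L}(D)$ is the set of closable linear operators $D\to D$. A weak hyperoperator $(a,D)$ on $\mathbb{R}$ is a linear operator $a:D\to D$, $D$ dense, $a$ closable, together with a linear multiplicative map $\mathcal{E}(\mathbb{R})\to\mathbf{L}(D)$, $h\mapsto h(a)$, sending each polynomial $p$ to $p(a)$, such that $h_k(a)x\to h(a)x$ for all $x\in D$ whenever $h_k\to h$ in $\mathcal{E}(\mathbb{R})$. *)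

(* Defs.v *)
From Stdlib Require Import Reals List.
From Coquelicot Require Import Coquelicot.
Open Scope R_scope.

Section Defs.
Context {X : CompleteNormedModule C_AbsRing}.

Definition is_subspace (D : X -> Prop) : Prop :=
  D zero /\ (forall x y, D x -> D y -> D (plus x y)) /\
  (forall (c : C) x, D x -> D (scal c x)).

Definition is_dense (D : X -> Prop) : Prop :=
  forall x (eps : R), 0 < eps -> exists d, D d /\ norm (minus x d) < eps.

(* a linear operator D -> D (values of T outside D are irrelevant) *)
Definition linear_on (D : X -> Prop) (T : X -> X) : Prop :=
  (forall x, D x -> D (T x)) /\
  (forall x y, D x -> D y -> T (plus x y) = plus (T x) (T y)) /\
  (forall (c : C) x, D x -> T (scal c x) = scal c (T x)).

Definition graph_closure (D : X -> Prop) (T : X -> X) (x y : X) : Prop :=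
  forall eps : R, 0 < eps -> exists d, D d /\
    norm (minus d x) < eps /\ norm (minus (T d) y) < eps.

Definition closable (D : X -> Prop) (T : X -> X) : Prop :=
  forall y, graph_closure D T zero y -> y = zero.

Definition in_LD (D : X -> Prop) (T : X -> X) : Prop :=
  linear_on D T /\ closable D T.

Definition bounded_linear (B : X -> X) : Prop :=
  (forall x y, B (plus x y) = plus (B x) (B y)) /\
  (forall (c : C) x, B (scal c x) = scal c (B x)) /\
  (exists M : R, forall x, norm (B x) <= M * norm x).

(* p(a) x for the polynomial with coefficient list cs = [c0; c1; ...],
   computed by Horner: c0 x + a (c1 x + a (c2 x + ...)) *)
Definition poly_op (a : X -> X) (cs : list C) (x : X) : X :=
  fold_right (fun c acc => plus (scal c x) (a acc)) zero cs.

End Defs.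

Definition poly_fun (cs : list C) (t : R) : C :=
  fold_right (fun c acc => Cplus c (Cmult (RtoC t) acc)) (RtoC 0) cs.

Definition smooth (h : R -> C) : Prop :=
  forall (n : nat) (t : R),
    ex_derive_n (fun s => Re (h s)) n t /\ ex_derive_n (fun s => Im (h s)) n t.

Definition cderive_n (h : R -> C) (n : nat) (t : R) : C :=
  (Derive_n (fun s => Re (h s)) n t, Derive_n (fun s => Im (h s)) n t).

(* h_k -> h in E(R): uniform convergence of all derivatives on compacts
   (every compact of R lies in some [-M, M]) *)
Definition E_conv (hs : nat -> R -> C) (h : R -> C) : Prop :=
  forall (n : nat) (M eps : R), 0 < eps -> exists K : nat, forall k : nat,
    (K <= k)%nat -> forall t, Rabs t <= M ->
      Cmod (Cminus (cderive_n (hs k) n t) (cderive_n h n t)) < eps.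

Definition cmul_fun (h g : R -> C) : R -> C := fun t => Cmult (h t) (g t).
Definition cadd_fun (h g : R -> C) : R -> C := fun t => Cplus (h t) (g t).
Definition cscal_fun (c : C) (h : R -> C) : R -> C := fun t => Cmult c (h t).

Definition r_fun (z : C) : R -> C := fun t => Cinv (Cminus z (RtoC t)).

Section Hyper.
Context {X : CompleteNormedModule C_AbsRing}.

Definition seq_conv (u : nat -> X) (l : X) : Prop :=
  forall eps : R, 0 < eps -> exists N : nat, forall n : nat,
    (N <= n)%nat -> norm (minus (u n) l) < eps.

Definition weak_hyperoperator (D : X -> Prop) (a : X -> X)
    (Phi : (R -> C) -> X -> X) : Prop :=
  is_subspace D /\ is_dense D /\ in_LD D a /\
  (forall h, smooth h -> in_LD D (Phi h)) /\
  (forall h g x, smooth h -> smooth g -> D x ->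
     Phi (cadd_fun h g) x = plus (Phi h x) (Phi g x)) /\
  (forall (c : C) h x, smooth h -> D x ->
     Phi (cscal_fun c h) x = scal c (Phi h x)) /\
  (forall h g x, smooth h -> smooth g -> D x ->
     Phi (cmul_fun h g) x = Phi h (Phi g x)) /\
  (forall cs x, D x -> Phi (poly_fun cs) x = poly_op a cs x) /\
  (forall hs h, (forall k, smooth (hs k)) -> smooth h -> E_conv hs h ->
     forall x, D x -> seq_conv (fun k => Phi (hs k) x) (Phi h x)).

(* z is in the resolvent set of the closure abar of a (graph of abar =
   graph_closure D a): z - abar is a bijection dom(abar) -> X whose inverse
   is a bounded operator on X *)
Definition in_resolvent_of_closure (D : X -> Prop) (a : X -> X) (z : C) : Prop :=
  exists Rz : X -> X, bounded_linear Rz /\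
    (forall y, graph_closure D a (Rz y) (minus (scal z (Rz y)) y)) /\
    (forall x w, graph_closure D a x w -> Rz (minus (scal z x) w) = x).

End Hyper.

(* Main.v *)
Require Import Defs.
From Stdlib Require Import Reals List Lra FunctionalExtensionality.
From Coquelicot Require Import Coquelicot.
Open Scope R_scope.

Lemma isd_const (c t : R) : is_derive (fun _ : R => c) t 0.
Proof. auto_derive; auto. Qed.

Section S.
Variables (a b : R).
Hypothesis hb : b <> 0.
Definition qf (t : R) := (a - t)^2 + b^2.
Lemma qf_pos t : 0 < qf t.
Proof. unfold qf. assert (0 < b^2) by (apply pow2_gt_0; auto). assert (0 <= (a-t)^2) by (apply pow2_ge_0). lra. Qed.

Definition tm (e : R * nat * nat) (t : R) : R :=
  let '(c, m, k) := e in c * (a - t)^m * (/ qf t)^k.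
Definition evalL (l : list (R*nat*nat)) (t : R) : R :=
  fold_right (fun e acc => tm e t + acc) 0 l.
Definition dtm (e : R*nat*nat) : list (R*nat*nat) :=
  let '(c, m, k) := e in
  ((- (c * INR m)), pred m, k) :: ((2 * c * INR k), S m, S k) :: nil.
Definition derivL (l : list (R*nat*nat)) := flat_map dtm l.

Lemma tm_derive e t : is_derive (tm e) t (evalL (dtm e) t).
Proof.
  destruct e as [[c m] k]. unfold tm, dtm, evalL; simpl.
  assert (Hq := qf_pos t).
  assert (H1 : is_derive (fun t => a - t) t (-1)).
  { auto_derive; auto; ring. }
  assert (H2 : is_derive (fun t => / qf t) t (2 * (a - t) * (/ qf t)^2)).
  { unfold qf in *; auto_derive. simpl in Hq; lra. field. simpl in Hq; lra. }
  apply (is_derive_pow _ m) in H1. apply (is_derive_pow _ k) in H2.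
  eapply is_derive_ext with (f := fun t => c * ((a - t)^m * (/ qf t)^k)).
  { intro. rewrite Rmult_assoc; reflexivity. }
  replace (- (c * INR m) * (a - t) ^ Init.Nat.pred m * (/ qf t) ^ k +
   (2 * c * INR k * ((a - t) * (a - t) ^ m) * (/ qf t * (/ qf t) ^ k) + 0))
  with (c * ((INR m * -1 * (a - t) ^ Init.Nat.pred m) * (/ qf t)^k +
         (a - t)^m * (INR k * (2 * (a - t) * (/ qf t) ^ 2) * (/ qf t) ^ Init.Nat.pred k))).
  2:{ destruct k; simpl; [ring|]. ring. }
  apply is_derive_scal. apply Derive.is_derive_mult; auto.
Qed.

Lemma evalL_derive l t : is_derive (evalL l) t (evalL (derivL l) t).
Proof.
  induction l as [|e l IH]; simpl.
  - unfold evalL; simpl. apply isd_const.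
  - assert (E : evalL (dtm e ++ derivL l) t = evalL (dtm e) t + evalL (derivL l) t).
    { unfold evalL. rewrite fold_right_app. destruct e as [[c m] k]; simpl. ring. }
    unfold derivL in *. simpl. rewrite E.
    apply (is_derive_plus (tm e) (evalL l)); auto. apply tm_derive.
Qed.

Lemma evalL_Dn n : forall l t, Derive_n (evalL l) n t = evalL (Nat.iter n derivL l) t
   /\ ex_derive_n (evalL l) n t.
Proof.
  induction n; intros l t; simpl.
  - auto.
  - split.
    + rewrite (Derive_ext _ (evalL (Nat.iter n derivL l))) by (intro; apply IHn).
      apply is_derive_unique. apply evalL_derive.
    + apply ex_derive_ext with (f := evalL (Nat.iter n derivL l)).
      { intro; symmetry; apply IHn. }
      eexists; apply evalL_derive.
Qed.

Lemma smooth_of (h : R -> C) l1 l2 :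
  (forall t, Re (h t) = evalL l1 t) -> (forall t, Im (h t) = evalL l2 t) -> smooth h.
Proof.
  intros E1 E2 n t. split.
  - apply ex_derive_n_ext with (f := evalL l1). intro; auto. apply evalL_Dn.
  - apply ex_derive_n_ext with (f := evalL l2). intro; auto. apply evalL_Dn.
Qed.
End S.

Lemma smooth_r (z : C) : Im z <> 0 -> smooth (r_fun z).
Proof.
  intro hz. destruct z as [a b]; simpl in hz.
  apply (smooth_of a b hz _ ((1, 1%nat, 1%nat) :: nil) ((-b, 0%nat, 1%nat) :: nil)).
  - intro t. unfold r_fun, evalL, tm, qf, Cinv, Cminus, RtoC; simpl. field.
    assert (H := qf_pos a b hz t). unfold qf in H. simpl in H. lra.
  - intro t. unfold r_fun, evalL, tm, qf, Cinv, Cminus, RtoC; simpl. field.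
    assert (H := qf_pos a b hz t). unfold qf in H. simpl in H. lra.
Qed.

Lemma smooth_lin (z : C) : Im z <> 0 -> smooth (fun t => Cminus z (RtoC t)).
Proof.
  intro hz. destruct z as [a b]; simpl in hz.
  apply (smooth_of a b hz _ ((1, 1%nat, 0%nat) :: nil) ((b, 0%nat, 0%nat) :: nil)).
  - intro t. unfold evalL, tm, Cminus, RtoC; simpl. ring.
  - intro t. unfold evalL, tm, Cminus, RtoC; simpl. ring.
Qed.

Section Grp.
Context {G : AbelianGroup}.
Lemma minus_def (x y : G) : minus x y = plus x (opp y).
Proof. reflexivity. Qed.
Lemma g_L2 (p q r : G) : minus p r = plus (minus p q) (minus q r).
Proof.
  unfold minus. rewrite <- plus_assoc. rewrite (plus_assoc (opp q)).
  rewrite plus_opp_l. rewrite plus_zero_l. reflexivity.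
Qed.
Lemma g_L1 (p q r s : G) : minus (minus p q) (minus r s) = minus (minus p r) (minus q s).
Proof.
  unfold minus. rewrite !(opp_plus (G:=G)), !(opp_opp (G:=G)).
  rewrite <- !plus_assoc. f_equal. rewrite !plus_assoc. f_equal. apply plus_comm.
Qed.
Lemma g_L3 (p q : G) : q = minus p (minus p q).
Proof.
  rewrite !minus_def, opp_plus, opp_opp, plus_assoc, plus_opp_r, plus_zero_l. reflexivity.
Qed.
Lemma g_eq (x y : G) : minus x y = zero -> x = y.
Proof.
  intro H. replace x with (plus (minus x y) y).
  - rewrite H. apply plus_zero_l.
  - unfold minus. rewrite <- plus_assoc, plus_opp_l, plus_zero_r. reflexivity.
Qed.
End Grp.

Section Nrm.
Context {X : CompleteNormedModule C_AbsRing}.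
Lemma norm_minus_le (u v : X) : norm (minus u v) <= norm u + norm v.
Proof. rewrite !minus_def. eapply Rle_trans. apply (norm_triangle (K:=C_AbsRing) (V:=X)). rewrite (norm_opp (K:=C_AbsRing) (V:=X)). lra. Qed.
Lemma norm_minus_sym' (u v : X) : norm (minus u v) = norm (minus v u).
Proof.
  rewrite <- norm_opp. f_equal. rewrite !minus_def. rewrite opp_plus, opp_opp. apply plus_comm.
Qed.
Lemma Xplus0 (u : X) : plus u zero = u. Proof. apply plus_zero_r. Qed.
Lemma Xscal1 (u : X) : scal one u = u. Proof. apply scal_one. Qed.
Lemma Xscalm1 (u : X) : scal (opp one) u = opp u. Proof. exact (scal_opp_one (K:=AbsRing.Ring C_AbsRing) (V:=CompleteNormedModule.ModuleSpace C_AbsRing X) u). Qed.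
Lemma Xscal0 (u : X) : scal zero u = zero. Proof. apply scal_zero_l. Qed.
Lemma Xmm (u : X) : minus u u = zero. Proof. apply minus_eq_zero. Qed.
Lemma Xnorm0 : norm (zero : X) = 0. Proof. exact (norm_zero (K:=C_AbsRing) (V:=CompleteNormedModule.NormedModule C_AbsRing X)). Qed.
Lemma Xnmm (u : X) : norm (minus u u) = 0. Proof. rewrite Xmm. apply Xnorm0. Qed.
Lemma Xnormge (u : X) : 0 <= norm u. Proof. exact (norm_ge_0 (K:=C_AbsRing) (V:=CompleteNormedModule.NormedModule C_AbsRing X) u). Qed.
Lemma Xnormeq (u : X) : norm u = 0 -> u = zero. Proof. exact (norm_eq_zero (K:=C_AbsRing) (V:=CompleteNormedModule.NormedModule C_AbsRing X) u). Qed.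
Lemma Xnormscal (c : C) (u : X) : norm (scal c u) <= Cmod c * norm u. Proof. exact (norm_scal (K:=C_AbsRing) (V:=CompleteNormedModule.NormedModule C_AbsRing X) c u). Qed.
Lemma Xtri (u v : X) : norm (plus u v) <= norm u + norm v. Proof. exact (norm_triangle (K:=C_AbsRing) (V:=CompleteNormedModule.NormedModule C_AbsRing X) u v). Qed.
Lemma scal_minus (c : C) (u v : X) : minus (scal c u) (scal c v) = scal c (minus u v).
Proof. rewrite !minus_def. rewrite (scal_distr_l (K:=C_Ring) (V:=X)), (scal_opp_r (K:=C_Ring) (V:=X)). reflexivity. Qed.
Lemma key (c : C) (u v p q : X) :
  norm (minus (minus (scal c u) (scal c v)) (minus p q)) <= Cmod c * norm (minus u v) + norm (minus p q).
Proof.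
  eapply Rle_trans. apply norm_minus_le. apply Rplus_le_compat_r.
  rewrite scal_minus. apply Xnormscal.
Qed.
End Nrm.

Theorem proposition5p7 (X : CompleteNormedModule C_AbsRing)
  (D : X -> Prop) (a : X -> X) (Phi : (R -> C) -> X -> X) :
  weak_hyperoperator D a Phi ->
  (forall z : C, Im z <> 0 ->
     exists B : X -> X, bounded_linear B /\
       (forall x y, graph_closure D (Phi (r_fun z)) x y <-> y = B x)) ->
  forall z : C, Im z <> 0 -> in_resolvent_of_closure D a z.
Proof.
  intros W HB z hz.
  destruct W as [[D0 [Dplus Dscal]] [HdD [[[Da [aplus ascal]] _] [HPhiL [_ [_ [Hmul [Hpoly _]]]]]]]].
  destruct (HB z hz) as [B [[Bplus [Bscal [M HM]]] HBc]].
  set (r := r_fun z).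
  set (p := fun t : R => Cminus z (RtoC t)).
  assert (Hr : smooth r) by (apply smooth_r; auto).
  assert (Hp : smooth p) by (apply smooth_lin; auto).
  assert (a0 : a zero = zero).
  { transitivity (a (scal zero zero)); [f_equal; symmetry; apply Xscal0|].
    rewrite ascal by auto. apply Xscal0. }
  assert (aopp : forall x, D x -> a (opp x) = opp (a x)).
  { intros x Dx. rewrite <- Xscalm1. rewrite ascal by auto. apply Xscalm1. }
  assert (Dopp : forall x, D x -> D (opp x)).
  { intros x Dx. rewrite <- Xscalm1. auto. }
  assert (Dminus : forall x y, D x -> D y -> D (minus x y)).
  { intros; rewrite !minus_def; auto. }
  assert (P1 : forall x, D x -> Phi (poly_fun (one :: nil)) x = x).
  { intros x Dx. rewrite Hpoly by auto. simpl. rewrite a0. etransitivity; [apply Xplus0|apply Xscal1]. }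
  assert (Pp : forall x, D x -> Phi p x = minus (scal z x) (a x)).
  { intros x Dx.
    assert (E : p = poly_fun (z :: opp one :: nil)).
    { apply functional_extensionality; intro t. unfold p, poly_fun.
      destruct z as [z1 z2]. simpl. unfold Cplus, Cmult, Cminus, Copp, RtoC. simpl.
      apply injective_projections; simpl; ring. }
    rewrite E, Hpoly by auto. simpl. rewrite a0.
    change (minus (scal z x) (a x)) with (plus (scal z x) (opp (a x))).
    f_equal. rewrite <- aopp by auto. f_equal.
    etransitivity; [apply Xplus0|apply Xscalm1]. }
  assert (Eone1 : cmul_fun r p = poly_fun (one :: nil)).
  { apply functional_extensionality; intro t. unfold cmul_fun, r, p, r_fun.
    rewrite Cinv_l.
    - unfold poly_fun; simpl. unfold Cplus, Cmult, RtoC. apply injective_projections; simpl; ring.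
    - intro H. apply hz. destruct z as [z1 z2]. unfold Cminus, Cplus, Copp, RtoC in H.
      simpl in *. injection H; intros; lra. }
  assert (Eone2 : cmul_fun p r = poly_fun (one :: nil)).
  { rewrite <- Eone1. apply functional_extensionality; intro t. unfold cmul_fun. apply Cmult_comm. }
  assert (DPr : forall x, D x -> D (Phi r x)).
  { intros x Dx. destruct (HPhiL r Hr) as [[H _] _]. auto. }
  assert (F1 : forall x, D x -> Phi r (minus (scal z x) (a x)) = x).
  { intros x Dx. rewrite <- Pp by auto. rewrite <- Hmul by auto. rewrite Eone1. auto. }
  assert (F2 : forall x, D x -> minus (scal z (Phi r x)) (a (Phi r x)) = x).
  { intros x Dx. rewrite <- Pp by auto. rewrite <- Hmul by auto. rewrite Eone2. auto. }
  assert (BPhi : forall x, D x -> B x = Phi r x).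
  { intros x Dx. symmetry. apply HBc. intros eps He. exists x. split; auto.
    rewrite !Xnmm. split; auto. }
  assert (Bopp : forall x, B (opp x) = opp (B x)).
  { intro x. rewrite <- Xscalm1. rewrite Bscal. apply Xscalm1. }
  assert (Bminus : forall x y, B (minus x y) = minus (B x) (B y)).
  { intros; rewrite !minus_def; rewrite Bplus, Bopp; auto. }
  set (M' := Rabs M + 1).
  assert (HM' : forall x, norm (B x) <= M' * norm x).
  { intro x. eapply Rle_trans. apply HM. unfold M'. pose proof (Xnormge x).
    pose proof (Rle_abs M). nra. }
  assert (M'pos : 0 < M') by (unfold M'; pose proof (Rabs_pos M); lra).
  set (K := Cmod z).
  assert (Kpos : 0 <= K) by apply Cmod_ge_0.
  assert (Hscz : forall w : X, norm (scal z w) <= K * norm w) by (intro; apply Xnormscal).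
  set (den := M' * (K + 1) + 1).
  assert (denpos : 0 < den) by (unfold den; nra).
  exists B. split; [split; [auto | split; [auto | exists M; auto]] |]. split.
  - intros y eps He.
    set (dl := eps / den).
    assert (dlpos : 0 < dl) by (unfold dl; apply Rdiv_lt_0_compat; auto).
    destruct (HdD y dl dlpos) as [d [Dd Hd]].
    rewrite norm_minus_sym' in Hd.
    exists (B d). rewrite BPhi by auto. split; [auto|].
    rewrite <- BPhi by auto.
    assert (N1 : norm (minus (B d) (B y)) <= M' * dl).
    { rewrite <- Bminus. eapply Rle_trans. apply HM'. apply Rmult_le_compat_l; lra. }
    assert (Edl : den * dl = eps) by (unfold dl; field; lra).
    split.
    + assert (M' * dl < den * dl) by (apply Rmult_lt_compat_r; auto; unfold den; nra). lra.
    + assert (Ea : a (B d) = minus (scal z (B d)) d).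
      { rewrite BPhi by auto.
        transitivity (minus (scal z (Phi r d)) (minus (scal z (Phi r d)) (a (Phi r d)))).
        apply g_L3. rewrite (F2 d Dd). reflexivity. }
      rewrite Ea, g_L1.
      eapply Rle_lt_trans. apply key.
      assert (K * norm (minus (B d) (B y)) <= K * (M' * dl)).
      { apply Rmult_le_compat_l; auto. }
      assert (K * (M' * dl) + dl < den * dl).
      { unfold den. nra. }
      change (Cmod z) with K. lra.
  - intros x w Hxw.
    apply g_eq. apply Xnormeq.
    apply Rle_antisym; [| apply Xnormge].
    apply Rnot_lt_le. intro Hlt.
    set (eps := norm (minus (B (minus (scal z x) w)) x)) in *.
    set (dl := eps / (2 * den)).
    assert (dlpos : 0 < dl) by (unfold dl; apply Rdiv_lt_0_compat; lra).
    assert (Edl : den * dl = eps / 2) by (unfold dl; field; lra).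
    destruct (Hxw dl dlpos) as [d [Dd [H1 H2]]].
    assert (BL : B (minus (scal z d) (a d)) = d).
    { rewrite BPhi. apply F1; auto. apply Dminus; auto. }
    assert (N : eps <= M' * (K * dl + dl) + dl).
    { unfold eps. rewrite (g_L2 _ (B (minus (scal z d) (a d)))).
      eapply Rle_trans. apply Xtri.
      apply Rplus_le_compat; [| rewrite BL; lra].
      rewrite <- Bminus, g_L1.
      eapply Rle_trans. apply HM'. apply Rmult_le_compat_l; [lra|].
      eapply Rle_trans. apply key.
      apply Rplus_le_compat.
      - apply Rmult_le_compat_l; auto.
        rewrite norm_minus_sym'; lra.
      - rewrite norm_minus_sym'; lra. }
    assert (M' * (K * dl + dl) + dl = den * dl) by (unfold den; ring).
    lra.
Qed.
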